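(* In the i.i.d. setting, consider Algorithm $\varepsilon$-Greedy-LCBT and let $a_n=\lceil\sqrt{n\ell_n}\rceil$. Let $\mathcal{E}_1$ be the event that $$|x^\top(\hat\theta_i-\theta)|\le\xi_i(x)\quad\text{for all }x\in\mathbb{R}^d\text{ and all }i\in\{a_n+1,\dots,n\}.$$ Let $g:=\sqrt{L\|V_{a_n}^{-1}\|_2}\,\big(\sigma\sqrt{d\log(n+n^2L/(d\beta))}+\sqrt{S\beta}\big)$. Let $\alpha^*$ satisfy $\mathbb{P}_{z\sim\mathcal{D}_x}(z^\top\theta\le\alpha^* )=1-\frac1n$. Then on $\mathcal{E}_1$, for every $i>a_n$ and every realization of $(\hat\theta_i,V_i,\mathcal{I}_i)$, $$\alpha^*-2g\le\alpha_i\le\alpha^*.$$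
   Context: Setting. Fix a horizon $n$ and dimension $d$. There is an unknown parameter $\theta\in\mathbb{R}^d$ with $\|\theta\|_2^2\le S$. For each $i\in[n]$ a feature vector $x_i\in\mathbb{R}^d$ is drawn independently from a distribution $\mathcal{D}_{x,i}$. Almost surely $\|x_i\|_2^2\le L$. The reward is $X_i=x_i^\top\theta\ge 0$. The noises $\eta_1,\dots,\eta_n$ are i.i.d. $\sigma$-sub-Gaussian and independent of the features, and $y_i=X_i+\eta_i$. i.i.d. setting: $\mathcal{D}_{x,i}=\mathcal{D}_x$ for all $i$. Quantities of Algorithm $\varepsilon$-Greedy-LCBT. Each stage $i$ is independently an exploration stage with probability $\varepsilon$ (else a decision stage). $\mathcal{I}_i$ is the set of exploration stages among $1,\dots,i$, and $\beta>0$. - $V_i=\sum_{t\in\mathcal{I}_i}x_tx_t^\top+\beta I_d$ and $\hat\theta_i=V_i^{-1}\sum_{t\in\mathcal{I}_i}y_tx_t$. - $\xi_i(x)=\sqrt{x^\top V_i^{-1}x}\,\big(\sigma\sqrt{d\log(n+n|\mathcal{I}_i|L/(d\beta))}+\sqrt{S\beta}\big)$. - $\alpha_i$ satisfies $\mathbb{P}_{z\sim\mathcal{D}_x}(z^\top\hat\theta_i-\xi_i(z)\le\alpha_i\mid\hat\theta_i,V_i,\mathcal{I}_i)=1-\frac1n$. The relevant distributions are assumed continuous, so that these quantiles exist and are unique. *)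

(* Defs.v *)
From HB Require Import structures.
From mathcomp Require Import all_boot all_order all_algebra.
From mathcomp Require Import all_classical all_reals all_analysis.
Set Implicit Arguments. Unset Strict Implicit. Unset Printing Implicit Defensive.
Import Order.TTheory GRing.Theory Num.Theory.
Local Open Scope classical_set_scope.
Local Open Scope ring_scope.

Definition normsq (R : realType) (d : nat) (x : 'cV[R]_d) : R :=
  \sum_(j < d) (x j 0) ^+ 2.
Definition norm2 (R : realType) (d : nat) (x : 'cV[R]_d) : R :=
  Num.sqrt (normsq x).
Definition dotv (R : realType) (d : nat) (x y : 'cV[R]_d) : R :=
  (x^T *m y) 0 0.
Definition spec_norm (R : realType) (d : nat) (A : 'M[R]_d) : R :=
  sup [set norm2 (A *m x) | x in [set x : 'cV[R]_d | norm2 x <= 1]].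

Definition a_n (R : realType) (n : nat) (ell : R) : nat :=
  `|Num.ceil (Num.sqrt (n%:R * ell))|%N.

(* Quantities of eps-Greedy-LCBT, for a realization:
   xs t = feature at stage t, ys t = observed y_t, expl t = stage t is an
   exploration stage. Stages are numbered 1..n. *)
Section Algo.
Variables (R : realType) (d : nat) (xs : nat -> 'cV[R]_d) (ys : nat -> R)
  (expl : nat -> bool) (beta : R).

Definition n_explore (i : nat) : nat := size [seq t <- iota 1 i | expl t].

Definition Vmat (i : nat) : 'M[R]_d :=
  \sum_(1 <= t < i.+1 | expl t) (xs t *m (xs t)^T) + beta%:M.

Definition theta_hat (i : nat) : 'cV[R]_d :=
  invmx (Vmat i) *m \sum_(1 <= t < i.+1 | expl t) (ys t *: xs t).

Definition xi (n : nat) (sigma S L : R) (i : nat) (x : 'cV[R]_d) : R :=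
  Num.sqrt (dotv x (invmx (Vmat i) *m x)) *
  (sigma * Num.sqrt (d%:R * ln (n%:R + n%:R * (n_explore i)%:R * L
                                          / (d%:R * beta)))
   + Num.sqrt (S * beta)).

Definition gconst (n : nat) (sigma S L ell : R) : R :=
  Num.sqrt (L * spec_norm (invmx (Vmat (a_n n ell)))) *
  (sigma * Num.sqrt (d%:R * ln (n%:R + n%:R ^+ 2 * L / (d%:R * beta)))
   + Num.sqrt (S * beta)).
End Algo.

Definition unique_quantile (R : realType) (dT : measure_display)
  (T : measurableType dT) (P : probability T R) (f : T -> R) (p a : R) : Prop :=
  P [set w | f w <= a] = p%:E /\
  (forall b, P [set w | f w <= b] = p%:E -> b = a).

(* Main.v *)
Require Import Defs.
From HB Require Import structures.
From mathcomp Require Import all_boot all_order all_algebra.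
From mathcomp Require Import all_classical all_reals all_analysis.
From mathcomp Require Import lra.
Import Order.TTheory GRing.Theory Num.Theory.
Local Open Scope classical_set_scope.
Local Open Scope ring_scope.

Section LA.
Variables (R : realType) (d : nat).
Implicit Types (x y u v w : 'cV[R]_d) (A B M : 'M[R]_d).

Lemma dotvE x y : dotv x y = \sum_(k < d) x k 0 * y k 0.
Proof. by rewrite /dotv mxE; apply: eq_bigr => k _; rewrite mxE. Qed.

Lemma dotvC x y : dotv x y = dotv y x.
Proof. by rewrite !dotvE; apply: eq_bigr => k _; rewrite mulrC. Qed.

Lemma dotvBr x y y' : dotv x (y - y') = dotv x y - dotv x y'.
Proof. by rewrite !dotvE -sumrB; apply: eq_bigr => k _; rewrite !mxE mulrBr. Qed.

Lemma dotvDr x y y' : dotv x (y + y') = dotv x y + dotv x y'.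
Proof. by rewrite !dotvE -big_split; apply: eq_bigr => k _; rewrite !mxE mulrDr. Qed.

Lemma dotvZr x a y : dotv x (a *: y) = a * dotv x y.
Proof. by rewrite !dotvE mulr_sumr; apply: eq_bigr => k _; rewrite !mxE mulrCA. Qed.

Lemma dotvBl x x' y : dotv (x - x') y = dotv x y - dotv x' y.
Proof. by rewrite dotvC dotvBr !(dotvC y). Qed.

Lemma dotvZl x a y : dotv (a *: x) y = a * dotv x y.
Proof. by rewrite dotvC dotvZr dotvC. Qed.

Lemma dotv_tr x A y : dotv x (A *m y) = dotv (A^T *m x) y.
Proof. by rewrite /dotv trmx_mul trmxK mulmxA. Qed.

Lemma dotvv x : dotv x x = normsq x.
Proof. by rewrite dotvE /normsq; apply: eq_bigr => k _; rewrite expr2. Qed.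

Lemma normsq_ge0 x : 0 <= normsq x.
Proof. by apply: sumr_ge0 => k _; rewrite sqr_ge0. Qed.

Lemma normsq_eq0 x : normsq x = 0 -> x = 0.
Proof.
move=> /eqP; rewrite psumr_eq0 => [/allP H|k _]; last by rewrite sqr_ge0.
apply/matrixP => i j; rewrite !mxE (ord1 j).
by have := H i (mem_index_enum _); rewrite sqrf_eq0 => /eqP.
Qed.

Lemma normsqZ a x : normsq (a *: x) = a ^+ 2 * normsq x.
Proof. by rewrite /normsq mulr_sumr; apply: eq_bigr => k _; rewrite mxE exprMn. Qed.

Definition q A x := dotv x (A *m x).

(* completing the square *)
Lemma q_inv_mono A B x : B^T = B -> (forall v, 0 <= q B v) ->
  (forall v, q B v <= q A v) -> A \in unitmx -> B \in unitmx ->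
  q (invmx A) x <= q (invmx B) x.
Proof.
move=> BT Bpos BA uA uB.
set y := invmx A *m x; set w := invmx B *m x.
have qAy : q A y = q (invmx A) x.
  by rewrite /q /y mulmxA mulmxV // mul1mx dotvC.
have xw : x = B *m w by rewrite /w mulmxA mulmxV // mul1mx.
have qBw : q B w = q (invmx B) x by rewrite /q -xw dotvC.
have dxy : dotv x y = dotv w (B *m y).
  rewrite [in LHS]xw dotvC dotv_tr BT.
  exact: dotvC.
have dyw : dotv y (B *m w) = dotv w (B *m y) by rewrite dotv_tr BT dotvC.
have H := Bpos (w - y).
rewrite /q mulmxBr !dotvBl !dotvBr -/(q B w) -/(q B y) dyw in H.
have qx : q (invmx A) x = dotv x y by [].
have Hb := BA y.
rewrite qBw in H; rewrite qAy qx dxy in Hb; rewrite -qBw qx dxy.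
rewrite qBw; lra.
Qed.
Lemma dotv_sumr (I : Type) (r : seq I) (P : pred I) (F : I -> 'cV[R]_d) x :
  dotv x (\sum_(t <- r | P t) F t) = \sum_(t <- r | P t) dotv x (F t).
Proof. by rewrite /dotv mulmx_sumr summxE. Qed.

Lemma mulmx_1x1 x (c : 'M[R]_1) : x *m c = c 0 0 *: x.
Proof. by apply/matrixP => i j; rewrite !mxE big_ord1 (ord1 j) mulrC. Qed.

Lemma q_outer x v : q (x *m x^T) v = (dotv x v) ^+ 2.
Proof.
rewrite /q -mulmxA mulmx_1x1 dotvZr -/(dotv x v) dotvC expr2 //.
Qed.

Lemma q_scalar a v : q a%:M v = a * normsq v.
Proof. by rewrite /q mul_scalar_mx dotvZr dotvv. Qed.

Lemma qD A B v : q (A + B) v = q A v + q B v.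
Proof. by rewrite /q mulmxDl dotvDr. Qed.

Lemma q_sum (I : Type) (r : seq I) (P : pred I) (F : I -> 'M[R]_d) v :
  q (\sum_(t <- r | P t) F t) v = \sum_(t <- r | P t) q (F t) v.
Proof. by rewrite /q mulmx_suml dotv_sumr. Qed.

Section V.
Variables (xs : nat -> 'cV[R]_d) (expl : nat -> bool) (beta : R).

Lemma q_Vmat i v : q (Vmat xs expl beta i) v =
  \sum_(1 <= t < i.+1 | expl t) (dotv (xs t) v) ^+ 2 + beta * normsq v.
Proof.
by rewrite /Vmat qD q_sum q_scalar; congr (_ + _); apply: eq_bigr => t _; rewrite q_outer.
Qed.

Lemma Vmat_tr i : (Vmat xs expl beta i)^T = Vmat xs expl beta i.
Proof.
rewrite /Vmat linearD /= tr_scalar_mx linear_sum /=; congr (_ + _).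
by apply: eq_bigr => t _; rewrite trmx_mul trmxK.
Qed.

Lemma Vmat_mono a i v : (a <= i)%N ->
  q (Vmat xs expl beta a) v <= q (Vmat xs expl beta i) v.
Proof.
move=> ai; rewrite !q_Vmat lerD2r.
rewrite [X in _ <= X](big_cat_nat (n := a.+1)) //= ?ltnS // lerDl.
by apply: sumr_ge0 => t _; rewrite sqr_ge0.
Qed.

Lemma Vmat_pos i v : 0 <= beta -> 0 <= q (Vmat xs expl beta i) v.
Proof.
move=> b0; rewrite q_Vmat addr_ge0 ?mulr_ge0 ?normsq_ge0 //.
by apply: sumr_ge0 => t _; rewrite sqr_ge0.
Qed.

Lemma Vmat_unit i : 0 < beta -> Vmat xs expl beta i \in unitmx.
Proof.
move=> b0; rewrite unitmxE unitfE; apply/det0P => -[v vn0 vV].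
have : q (Vmat xs expl beta i) v^T = 0.
  by rewrite /q -{1}(Vmat_tr i) -trmx_mul vV trmx0 /dotv mulmx0 mxE.
rewrite q_Vmat => H.
have h1 : 0 <= \sum_(1 <= t < i.+1 | expl t) (dotv (xs t) v^T) ^+ 2.
  by apply: sumr_ge0 => t _; rewrite sqr_ge0.
have h2 := normsq_ge0 v^T.
have : beta * normsq v^T = 0 by nra.
move/eqP; rewrite mulf_eq0 gt_eqF //= => /eqP /normsq_eq0 /eqP.
by rewrite -trmx0 (inj_eq trmx_inj) (negbTE vn0).
Qed.
End V.
Lemma coord_le_normsq x k : x k 0 ^+ 2 <= normsq x.
Proof.
rewrite /normsq (bigD1 k) //= lerDl; apply: sumr_ge0 => j _; exact: sqr_ge0.
Qed.

Definition specC M : R := \sum_(j < d) (\sum_(k < d) `|M j k|) ^+ 2.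

Lemma spec_elem_bound M u : norm2 u <= 1 -> norm2 (M *m u) <= Num.sqrt (specC M).
Proof.
move=> u1; apply: ler_wsqrtr; rewrite /normsq /specC; apply: ler_sum => j _.
have nu : normsq u <= 1.
  have h := sqr_sqrtr (normsq_ge0 u); rewrite /norm2 in u1.
  have h0 := sqrtr_ge0 (normsq u); nra.
have uk : forall k, `|u k 0| <= 1.
  move=> k; have := coord_le_normsq u k; rewrite ler_norml => h.
  apply/andP; split; nra.
have hb : `|(M *m u) j 0| <= \sum_(k < d) `|M j k|.
  rewrite mxE; apply: le_trans (ler_norm_sum _ _ _) _.
  apply: ler_sum => k _; rewrite normrM; apply: ler_piMr => //.
have hn := real_normK (num_real ((M *m u) j 0)).
have h0 := normr_ge0 ((M *m u) j 0).
rewrite -hn; nra.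
Qed.

Lemma spec_ub M u : norm2 u <= 1 -> norm2 (M *m u) <= spec_norm M.
Proof.
move=> u1; apply: sup_upper_bound; last by exists u.
split; first by exists (norm2 (M *m u)), u.
exists (Num.sqrt (specC M)) => _ [v v1 <-]; exact: spec_elem_bound.
Qed.

Lemma norm2_0 : norm2 (0 : 'cV[R]_d) = 0.
Proof.
by rewrite /norm2 /normsq big1 ?sqrtr0 // => k _; rewrite mxE expr0n.
Qed.

Lemma spec_ge0 M : 0 <= spec_norm M.
Proof.
have := @spec_ub M 0; rewrite mulmx0 norm2_0; apply; exact: ler01.
Qed.

Lemma spec_sq M z : normsq (M *m z) <= spec_norm M ^+ 2 * normsq z.
Proof.
have s0 := spec_ge0 M.
have [z0|zn0] := eqVneq (normsq z) 0.
  rewrite z0 mulr0 (normsq_eq0 _ z0) mulmx0 /normsq big1 // => k _; by rewrite mxE expr0n.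
have zp : 0 < normsq z by rewrite lt_def zn0 normsq_ge0.
set r := Num.sqrt (normsq z).
have r0 : 0 < r by rewrite sqrtr_gt0.
have r2 : r ^+ 2 = normsq z by rewrite sqr_sqrtr // normsq_ge0.
set u := r^-1 *: z.
have nu : normsq u = 1 by rewrite normsqZ exprVn r2 mulVf.
have := @spec_ub M u; rewrite /norm2 nu sqrtr1 lexx => /(_ isT).
rewrite /u -scalemxAr normsqZ exprVn r2 => h.
have hs := sqrtr_ge0 ((normsq z)^-1 * normsq (M *m z)).
have hh : (normsq z)^-1 * normsq (M *m z) <= spec_norm M ^+ 2.
  rewrite -[X in X <= _]sqr_sqrtr ?mulr_ge0 ?invr_ge0 ?normsq_ge0 //.
  by rewrite ler_sqr ?nnegrE ?sqrtr_ge0.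
have zi : 0 < (normsq z)^-1 by rewrite invr_gt0.
rewrite -(ler_pM2l zi) mulrCA mulVf ?mulr1 //.
Qed.

Lemma dot_le x y s : 0 <= s -> normsq y <= s ^+ 2 * normsq x ->
  dotv x y <= s * normsq x.
Proof.
move=> s0 h; have [es|sp] := eqVneq s 0.
  rewrite es expr0n mul0r in h; rewrite es mul0r.
  have y0 : normsq y = 0 by apply: le_anti; rewrite h normsq_ge0.
  by rewrite (normsq_eq0 _ y0) /dotv mulmx0 mxE.
have spos : 0 < s by rewrite lt_def sp s0.
have := normsq_ge0 (s *: x - y).
rewrite -dotvv !dotvBl !dotvBr !dotvZl !dotvZr !dotvv (dotvC y) => H.
nra.
Qed.

Lemma q_spec M z : q M z <= spec_norm M * normsq z.
Proof. apply: dot_le; [exact: spec_ge0 | exact: spec_sq]. Qed.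
Lemma xi_le_g (xs : nat -> 'cV[R]_d) (expl : nat -> bool) (beta : R)
  n sigma S L ell i z :
  (0 < d)%N -> (0 < n)%N -> 0 < beta -> 0 <= sigma -> 0 <= L ->
  (a_n n ell < i <= n)%N -> normsq z <= L ->
  xi xs expl beta n sigma S L i z <= gconst xs expl beta n sigma S L ell.
Proof.
move=> d0 n0 b0 s0 L0 /andP[ai iN] zL.
rewrite /xi /gconst; set a := a_n n ell.
have h1 : q (invmx (Vmat xs expl beta i)) z <= q (invmx (Vmat xs expl beta a)) z.
  apply: q_inv_mono; rewrite ?Vmat_unit ?Vmat_tr //.
  - by move=> v; apply: Vmat_pos; rewrite ltW.
  - by move=> v; apply: Vmat_mono; rewrite ltnW.
have h2 := q_spec (invmx (Vmat xs expl beta a)) z.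
have sp := spec_ge0 (invmx (Vmat xs expl beta a)).
have h3 : q (invmx (Vmat xs expl beta i)) z <= L * spec_norm (invmx (Vmat xs expl beta a)).
  have := normsq_ge0 z; nra.
apply: ler_pM; first exact: sqrtr_ge0.
- by rewrite addr_ge0 ?mulr_ge0 ?sqrtr_ge0.
- exact: ler_wsqrtr.
rewrite lerD2r; apply: ler_wpM2l => //; apply: ler_wsqrtr.
apply: ler_wpM2l; first by rewrite ler0n.
have mn : ((n_explore expl i)%:R : R) <= n%:R.
  rewrite ler_nat /n_explore size_filter (leq_trans (count_size _ _)) //.
  by rewrite size_iota.
have nR : (0 : R) < n%:R by rewrite ltr0n.
have dR : (0 : R) < d%:R by rewrite ltr0n.
have c0 : 0 <= L / (d%:R * beta) by rewrite divr_ge0 // mulr_ge0 // ltW.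
have hm0 : (0 : R) <= (n_explore expl i)%:R by rewrite ler0n.
have e1 : n%:R * (n_explore expl i)%:R * L / (d%:R * beta) = n%:R * (n_explore expl i)%:R * (L / (d%:R * beta)) by rewrite !mulrA.
have e2 : n%:R ^+ 2 * L / (d%:R * beta) = n%:R * n%:R * (L / (d%:R * beta)) by rewrite expr2 !mulrA.
have di : 0 <= (d%:R * beta)^-1 by rewrite invr_ge0 mulr_ge0 // ltW.
rewrite ler_ln ?posrE.
- rewrite lerD2l ler_wpM2r // ler_wpM2r // expr2 ler_wpM2l // ltW //.
- apply: (lt_le_trans nR); rewrite lerDl !mulr_ge0 // ltW //.
- apply: (lt_le_trans nR); rewrite lerDl !mulr_ge0 // ?exprn_ge0 // ltW //.
Qed.
End LA.

Arguments q {R d}.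
Arguments xi_le_g {R d}.

Section Meas.
Variables (R : realType) (d : nat) (dO : measure_display) (Omega : measurableType dO)
  (z : Omega -> 'cV[R]_d).
Hypothesis mz : forall j : 'I_d, measurable_fun setT (fun w => z w j 0).

Lemma mdot (c : 'cV[R]_d) : measurable_fun setT (fun w => dotv (z w) c).
Proof.
under eq_fun do rewrite dotvE.
apply: measurable_sum => k; apply: measurable_realfun.measurable_funM; [exact: mz | exact: measurable_cst].
Qed.

Lemma mq (M : 'M[R]_d) : measurable_fun setT (fun w => q M (z w)).
Proof.
under eq_fun do rewrite /q dotvE.
apply: measurable_sum => k; apply: measurable_realfun.measurable_funM; first exact: mz.
under eq_fun do rewrite mxE.
apply: measurable_sum => l; apply: measurable_realfun.measurable_funM; [exact: measurable_cst | exact: mz].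
Qed.

Lemma mnormsq : measurable_fun setT (fun w => normsq (z w)).
Proof.
under eq_fun do rewrite /normsq.
apply: measurable_sum => k; under eq_fun do rewrite expr2.
apply: measurable_realfun.measurable_funM; exact: mz.
Qed.

Lemma mle (f : Omega -> R) b : measurable_fun setT f -> measurable [set w | f w <= b].
Proof.
move=> mf.
have := measurable_realfun.measurable_fun_ler mf (measurable_cst b) measurableT (Y := [set true]) I.
by rewrite setTI.
Qed.
End Meas.

Theorem mainTheorem14 (R : realType) (d n : nat) (L S sigma beta ell : R)
  (theta : 'cV[R]_d) (dO : measure_display) (Omega : measurableType dO)
  (P : probability Omega R) (z : Omega -> 'cV[R]_d)
  (xs : nat -> 'cV[R]_d) (ys : nat -> R) (expl : nat -> bool)
  (alpha_star : R) :
  (0 < d)%N -> (0 < n)%N -> 0 < beta -> 0 <= sigma -> 0 <= L ->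
  normsq theta <= S ->
  (* z ~ D_x : a random vector on (Omega, P) *)
  (forall j : 'I_d, measurable_fun setT (fun w => z w j 0)) ->
  P [set w | normsq (z w) <= L] = 1%E ->
  P [set w | 0 <= dotv (z w) theta] = 1%E ->
  (* the realized features lie in the support *)
  (forall t, (1 <= t <= n)%N -> normsq (xs t) <= L /\ 0 <= dotv (xs t) theta) ->
  (* alpha_star : P(z^T theta <= alpha_star) = 1 - 1/n, unique quantile *)
  unique_quantile P (fun w => dotv (z w) theta) (1 - n%:R^-1) alpha_star ->
  (* event E_1 *)
  (forall (x : 'cV[R]_d) (i : nat), (a_n n ell < i <= n)%N ->
     `|dotv x (theta_hat xs ys expl beta i - theta)|
       <= xi xs expl beta n sigma S L i x) ->
  forall i : nat, (a_n n ell < i <= n)%N ->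
  forall alpha : R,
    unique_quantile P
      (fun w => dotv (z w) (theta_hat xs ys expl beta i)
                - xi xs expl beta n sigma S L i (z w))
      (1 - n%:R^-1) alpha ->
    alpha_star - 2 * gconst xs expl beta n sigma S L ell <= alpha <= alpha_star.
Proof.
move=> d0 n0 b0 s0 L0 _ mz PL _ _ [qs qsU] E1 i hi alpha [qa qaU].
set th := theta_hat xs ys expl beta i.
set g := gconst xs expl beta n sigma S L ell.
pose p : R := 1 - n%:R^-1.
set f := fun w => dotv (z w) th - xi xs expl beta n sigma S L i (z w).
have mf : measurable_fun setT f.
  apply: measurable_realfun.measurable_funB; first exact: mdot.
  rewrite /xi; apply: measurable_realfun.measurable_funM; last exact: measurable_cst.
  apply: measurableT_comp; first exact: (measurable_realfun.continuous_measurable_fun (@sqrt_continuous R)).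
  by apply: mq.
have mth : measurable_fun setT (fun w => dotv (z w) theta) by exact: mdot.
have hE : forall w, - xi xs expl beta n sigma S L i (z w) <= dotv (z w) th - dotv (z w) theta
    <= xi xs expl beta n sigma S L i (z w).
  by move=> w; rewrite -dotvBr -ler_norml; apply: E1.
apply/andP; split.
- have [//|lt] := leP (alpha_star - 2 * g) alpha.
  set G := [set w | normsq (z w) <= L].
  have mG : measurable G by apply: mle; by apply: mnormsq.
  have PN : P (~` G) = 0%E by rewrite probability_setC // PL -EFinB subrr.
  have eq : P [set w | dotv (z w) theta <= alpha + 2 * g] = p%:E.
    apply/eqP; rewrite eq_le; apply/andP; split.
      rewrite -qs; apply: le_measure; rewrite ?inE; try exact: mle.
      by move=> w /=; move=> h; apply: (le_trans h); rewrite -lerBrDr; apply: ltW.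
    rewrite -qa; apply: (@le_trans _ _ (P ([set w | dotv (z w) theta <= alpha + 2 * g] `|` ~` G))).
      apply: le_measure; rewrite ?inE; try exact: mle.
        by apply: measurableU; [exact: mle | exact: measurableC].
      move=> w /= fw; rewrite /setU /setC /=.
      have [wG|wN] := boolP (normsq (z w) <= L); last by right; apply/negP.
      left; have hx := xi_le_g xs expl beta n sigma S L ell i (z w) d0 n0 b0 s0 L0 hi wG.
      have := hE w; rewrite /f in fw; move/andP => [h1 h2].
      rewrite -/g in hx; lra.
    have mA : measurable [set w | dotv (z w) theta <= alpha + 2 * g] by apply: mle.
    apply: le_trans (measureU2 P mA (measurableC mG)) _.
    have h : (P (~` G) <= 0)%E by rewrite PN.
    apply: le_trans (leeD (lexx _) h) _.
    by rewrite adde0.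
  have := qsU _ eq; lra.
- have [//|lt] := leP alpha alpha_star.
  have eq : P [set w | f w <= alpha_star] = p%:E.
    apply/eqP; rewrite eq_le; apply/andP; split.
      rewrite -qa; apply: le_measure; rewrite ?inE; try exact: mle.
      by move=> w /= h; apply: (le_trans h); apply: ltW.
    rewrite -qs; apply: le_measure; rewrite ?inE; try exact: mle.
    move=> w /= h; have := hE w; move/andP => [h1 h2]; rewrite /f; lra.
  have := qaU _ eq; lra.
Qed.
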